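(* For every integer $m\ge0$ and every odd positive integer $k$, \[ \sum_{i=0}^{2m}(-1)^i\binom{m+i}{m-i}\binom{m+k-i}{m-k+i}=0 . \]
   Context: Binomial coefficients $\binom{a}{b}$ are taken to be $0$ when $b<0$ or $b>a$ (in particular, whenever the lower index is negative). *)

(* Defs.v *)
From mathcomp Require Import all_boot all_order all_algebra.
Set Implicit Arguments. Unset Strict Implicit. Unset Printing Implicit Defensive.
Import Order.TTheory GRing.Theory Num.Theory.
Local Open Scope ring_scope.

Definition binomZ (a b : int) : int :=
  if (b < 0) || (a < b) then 0 else ('C(`|a|%N, `|b|%N))%:Z.

(* Main.v *)
Require Import Defs.
From mathcomp Require Import all_boot all_order all_algebra.
From mathcomp Require Import zify ring.
Import Order.TTheory GRing.Theory Num.Theory.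
Local Open Scope ring_scope.

Lemma g0 (m : nat) (j : int) : (j < 0) || (m%:Z < j) -> binomZ (m%:Z + j) (m%:Z - j) = 0.
Proof.
move=> /orP H; rewrite /binomZ.
have -> : (m%:Z - j < 0) || (m%:Z + j < m%:Z - j).
  by apply/orP; case: H => H; [right|left]; lia.
by [].
Qed.

Theorem mainTheorem14 (m k : nat) (hk : odd k) :
  \sum_(0 <= i < (2 * m).+1)
     (-1) ^+ i * binomZ (m%:Z + i%:Z) (m%:Z - i%:Z)
       * binomZ (m%:Z + k%:Z - i%:Z) (m%:Z - k%:Z + i%:Z) = 0 :> int.
Proof.
set g := fun j : int => binomZ (m%:Z + j) (m%:Z - j).
set f := fun i : nat => (-1) ^+ i * g i%:Z * g (k%:Z - i%:Z) : int.
have Ef : forall i : nat, (-1) ^+ i * binomZ (m%:Z + i%:Z) (m%:Z - i%:Z)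
       * binomZ (m%:Z + k%:Z - i%:Z) (m%:Z - k%:Z + i%:Z) = f i.
  move=> i; rewrite /f /g; congr (_ * _ * binomZ _ _); ring.
under eq_bigr do rewrite Ef.
have fz : forall i : nat, (minn m k < i)%N -> f i = 0.
  move=> i Hi; rewrite /f /g.
  case: (leqP i m) => Him.
    rewrite (@g0 m (k%:Z - i%:Z)) ?mulr0 //; apply/orP; left; lia.
  rewrite (@g0 m i%:Z) ?mulr0 ?mul0r //; apply/orP; right; lia.
have ext : forall N, (minn m k < N)%N ->
    \sum_(0 <= i < N) f i = \sum_(0 <= i < (minn m k).+1) f i.
  elim=> [//|N IH] HN.
  case: (ltnP (minn m k) N) => HN'.
    by rewrite big_nat_recr //= IH // fz // addr0.
  by have -> : N = minn m k by lia.
rewrite ext; last by lia.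
rewrite -(ext k.+1); last by lia.
set S := \sum_(0 <= i < k.+1) f i.
have HS : S = - S.
  rewrite /S {1}big_nat_rev /= -sumrN big_nat_cond [RHS]big_nat_cond.
  apply: eq_bigr => i /andP [/andP [_ Hi] _].
  rewrite add0n subSS /f.
  have Hki : ((k - i)%N%:Z = k%:Z - i%:Z) by lia.
  rewrite Hki.
  have -> : k%:Z - (k%:Z - i%:Z) = i%:Z by ring.
  rewrite -signr_odd oddB // hk -[in RHS]signr_odd.
  case: (odd i) => /=; rewrite ?expr0 ?expr1.
  all: rewrite ?mulN1r ?mul1r ?mulNr ?mul1r ?opprK.
  - exact: mulrC.
  - by congr (- _); exact: mulrC.
have : 2%:R * S = 0 by rewrite mulr_natl mulr2n {2}HS subrr.
by move/eqP; rewrite mulf_eq0 => /orP [//|/eqP].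
Qed.
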